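(* Let $G$ and $\ell$ be as in the construction described in the context. If for some $q\in[t]$ the instance $(X,\mathcal{S}_q)$ of \textsc{Exact-3-Cover} is a Yes-instance, then $G$ has an acyclic matching of size $\ell$.
   Context: Construction. Let $n=3c$ with $c\in\mathbb{N}$, $X=[n]$, and let $(X,\mathcal{S}_1),\dots,(X,\mathcal{S}_t)$ be instances of \textsc{Exact-3-Cover} (each $\mathcal{S}_i$ a collection of 3-element subsets of $X$, all $\mathcal{S}_i$ of the same size $m$ and pairwise distinct as collections). An instance $(X,\mathcal{S})$ is a Yes-instance if some subcollection of $\mathcal{S}$ covers every element of $X$ exactly once. Let $\mathcal{C}=\bigcup_{i\in[t]}\mathcal{S}_i=\{s_1,\dots,s_{|\mathcal{C}|}\}$ (distinct 3-sets). The graph $G$: a vertex set $X'=\{v_a:a\in X\}$; for each $s_j=\{a,b,c\}\in\mathcal{C}$ a set gadget $Q_j$ with vertices $u_{ja},u_{jb},u_{jc}$ (interface vertices), $u_j,w_j,u_j',w_j'$, where each of $u_j,w_j$ is adjacent to each of $u_{ja},u_{jb},u_{jc}$, and additionally $u_jw_j,u_ju_j',w_jw_j'$ are edges; for each $s_j\in\mathcal{C}$ and $d\in s_j$ the edge $u_{jd}v_d$ (cross edges); a vertex $p$ and vertices $P=\{p_1,\dots,p_t\}$ with edges $pp_i$ for all $i$; and for each $i\in[t]$ and each $s_j\in\mathcal{C}\setminus\mathcal{S}_i$, edges from $p_i$ to the three interface vertices of $Q_j$. There are no other edges. Set $\ell=2|\mathcal{C}|+\frac{2n}{3}+1$. A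 matching $M$ is acyclic if the subgraph induced by the endpoints of its edges is a forest. *)

(* Defs.v *)
From HB Require Import structures.
From mathcomp Require Import all_boot.
Set Implicit Arguments. Unset Strict Implicit. Unset Printing Implicit Defensive.

Section Graphs.
Variable T : finType.
Variable V : {set T}.
Variable e : rel T.

Definition is_matching (M : {set {set T}}) : Prop :=
  (forall E, E \in M -> exists x y, [/\ x \in V, y \in V, x != y, e x y & E = [set x; y]])
  /\ (forall E F, E \in M -> F \in M -> E != F -> [disjoint E & F]).

Definition has_cycle_in (U : {set T}) : Prop :=
  exists s : seq T, [/\ 3 <= size s, uniq s, all (fun x => x \in U) s & cycle e s].

Definition induced_forest (U : {set T}) : Prop := ~ has_cycle_in U.

Definition acyclic_matching (M : {set {set T}}) : Prop :=
  is_matching M /\ induced_forest (cover M).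
End Graphs.

Definition X3C_yes (n : nat) (S : {set {set 'I_n}}) : Prop :=
  exists sub : {set {set 'I_n}}, sub \subset S /\
    forall a : 'I_n, #|[set s in sub | a \in s]| = 1.

Inductive vert (n t : nat) :=
| VX of 'I_n
| VI of {set 'I_n} & 'I_n         (* interface vertex u_{j a} of gadget of s_j *)
| VU of {set 'I_n}
| VW of {set 'I_n}
| VU' of {set 'I_n}
| VW' of {set 'I_n}
| VP
| VPi of 'I_t.

Section Construction.
Variables n t : nat.

Definition vcode (v : vert n t) :
  ('I_n + ({set 'I_n} * 'I_n)) + (({set 'I_n} * 'I_4) + option 'I_t) :=
  match v with
  | VX a => inl (inl a)
  | VI s a => inl (inr (s, a))
  | VU s => inr (inl (s, inord 0))
  | VW s => inr (inl (s, inord 1))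
  | VU' s => inr (inl (s, inord 2))
  | VW' s => inr (inl (s, inord 3))
  | VP => inr (inr None)
  | VPi i => inr (inr (Some i))
  end.

Definition vdecode (x : ('I_n + ({set 'I_n} * 'I_n)) + (({set 'I_n} * 'I_4) + option 'I_t))
  : vert n t :=
  match x with
  | inl (inl a) => @VX n t a
  | inl (inr (s, a)) => @VI n t s a
  | inr (inl (s, k)) =>
      match val k with 0 => @VU n t s | 1 => @VW n t s | 2 => @VU' n t s | _ => @VW' n t s end
  | inr (inr None) => @VP n t
  | inr (inr (Some i)) => @VPi n t i
  end.

Lemma vcodeK : cancel vcode vdecode.
Proof. by case=> //= s; rewrite inordK. Qed.

HB.instance Definition _ := Finite.copy (vert n t) (can_type vcodeK).
End Construction.

Section Graph.
Variables n t : nat.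
Variable S : 'I_t -> {set {set 'I_n}}.

Definition Cset : {set {set 'I_n}} := \bigcup_(i < t) S i.

Definition Gvert : {set vert n t} :=
  [set v | match v with
           | VX _ | VP | VPi _ => true
           | VI s a => (s \in Cset) && (a \in s)
           | VU s | VW s | VU' s | VW' s => s \in Cset
           end].

Definition Gbase (x y : vert n t) : bool :=
  match x, y with
  | VI s a, VU s' => [&& s == s', s \in Cset & a \in s]
  | VI s a, VW s' => [&& s == s', s \in Cset & a \in s]
  | VU s, VW s' => (s == s') && (s \in Cset)
  | VU s, VU' s' => (s == s') && (s \in Cset)
  | VW s, VW' s' => (s == s') && (s \in Cset)
  | VI s a, VX b => [&& a == b, s \in Cset & a \in s]
  | VP, VPi _ => true
  | VPi i, VI s a => [&& s \in Cset, a \in s & s \notin S i]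
  | _, _ => false
  end.

Definition Gadj : rel (vert n t) := fun x y => Gbase x y || Gbase y x.

(* ell = 2|C| + 2n/3 + 1, with n = 3c *)
End Graph.

(* Main.v *)
Require Import Defs.
From mathcomp Require Import all_boot zify.
Set Implicit Arguments. Unset Strict Implicit.

Definition fsel n (sub : {set {set 'I_n}}) (a : 'I_n) : {set 'I_n} :=
  odflt set0 [pick s in sub | a \in s].

Definition inU n t (sub : {set {set 'I_n}}) (C : {set {set 'I_n}}) (q : 'I_t) (v : vert n t) : bool :=
  match v with
  | VX _ => true
  | VI s a => (s \in sub) && (a \in s)
  | VU s | VU' s => s \in C
  | VW s | VW' s => (s \in C) && (s \notin sub)
  | VP => true
  | VPi i => i == q
  end.

Definition rank n t (sub : {set {set 'I_n}}) (v : vert n t) : nat :=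
  match v with
  | VX _ => 1 | VI _ _ => 2 | VU s => if s \in sub then 3 else 2
  | VW _ => 3 | VU' _ => 1 | VW' _ => 1 | VP => 2 | VPi _ => 1 end.

Definition parent n t (sub : {set {set 'I_n}}) (v : vert n t) : vert n t :=
  match v with
  | VX a => @VI n t (fsel sub a) a | VI s _ => @VU n t s | VU s => @VW n t s | VW s => @VW n t s
  | VU' s => @VU n t s | VW' s => @VW n t s | VP => @VP n t | VPi _ => @VP n t end.

Lemma local_parent n t (S : 'I_t -> {set {set 'I_n}}) q (sub : {set {set 'I_n}})
  (Hsub : sub \subset S q)
  (Hu : forall a s, s \in sub -> a \in s -> s = fsel sub a) x y :
  inU sub (Cset S) q x -> inU sub (Cset S) q y -> Gadj S x y ->
  rank sub x <= rank sub y -> y = parent sub x.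
Proof.
case: x => [a|s a|s|s|s|s||i]; case: y => [b|s' b|s'|s'|s'|s'||j] //=;
 rewrite /Gadj /= ?orbF ?andbT.
all: move=> H1 H2 H3 H4;
  repeat match goal with H : is_true (_ && _) |- _ => case/andP: H => ?? end;
  repeat match goal with H : is_true (_ == _) |- _ => move/eqP: H => ? end; subst => //.
all: try match goal with |- VI _ ?s ?a = _ => by rewrite -(Hu a s) end.
all: try match goal with H: is_true (?x \in ?A), H' : is_true (?x \notin ?A) |- _ => by rewrite H in H' end.
all: try match goal with H: is_true (?x \in ?A), H4 : is_true (_ <= _) |- _ => by rewrite H in H4 end.
all: try match goal with H: is_true (?x \notin ?A), H4 : is_true (_ < _) |- _ => by rewrite (negbTE H) in H4 end.
all: try match goal with H: is_true (?x \in ?A), H' : is_true (?x \notin ?B) |- _ => by rewrite (subsetP Hsub _ H) in H' end.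
all: move: H4; case: ifP => //.
all: move: H4; case: ifP => //.
Qed.
Lemma seq_min (T : eqType) (rk : T -> nat) (s : seq T) x0 : x0 \in s ->
  exists2 x, x \in s & forall y, y \in s -> rk x <= rk y.
Proof.
elim: s x0 => // a s IH x0 _.
case: s IH => [|b s] IH.
  by exists a => [|y]; rewrite ?mem_head // inE => /eqP->.
have [x xin xmin] := IH b (mem_head _ _).
case: (leqP (rk a) (rk x)) => h.
  exists a; first exact: mem_head.
  move=> y; rewrite inE => /orP[/eqP->//|/xmin]; exact: leq_trans.
exists x; first by rewrite inE xin orbT.
move=> y; rewrite inE => /orP[/eqP->|/xmin//]; exact: ltnW.
Qed.

Lemma no_cycle_rank (T : eqType) (e : rel T) (U : pred T) (rk : T -> nat)
  (parent : T -> T) :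
  symmetric e ->
  (forall x y, U x -> U y -> e x y -> rk x <= rk y -> y = parent x) ->
  forall s, 3 <= size s -> uniq s -> all U s -> ~~ cycle e s.
Proof.
move=> esym Hp s ss us aU; apply/negP => cs.
have [x0 x0in]: exists x0, x0 \in s by case: s ss {us aU cs} => // a s _; exists a; exact: mem_head.
have [x xin xmin] := seq_min rk x0in.
case: (rot_to xin) => i s' Ds.
have ss' : 3 <= size (x :: s') by rewrite -Ds size_rot.
have us' : uniq (x :: s') by rewrite -Ds rot_uniq.
have cs' : cycle e (x :: s') by rewrite -Ds rot_cycle.
have mem' : forall z, z \in x :: s' -> z \in s by move=> z; rewrite -Ds mem_rot.
clear Ds; case: s' ss' us' cs' mem' => [|y [|z r]] //= _ us' cs' mem'.
move: cs' => /andP[exy]; rewrite rcons_path => /andP[_ ].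
move=> /= /andP[_ elx]; rewrite esym in elx.
have Uof : forall w, w \in s -> U w by move=> w; exact: (allP aU).
have hy : y = parent x.
  apply: Hp; [exact: Uof | apply: Uof; apply: mem' | exact: exy | apply: xmin; apply: mem'];
  by rewrite !inE eqxx ?orbT.
have lin : last z r \in z :: r by exact: mem_last.
have hl : last z r = parent x.
  apply: Hp; [exact: Uof | apply: Uof; apply: mem' | exact: elx | apply: xmin; apply: mem'];
  by move: lin; rewrite !inE => /orP[->|->]; rewrite ?orbT.
move: us' => /andP[_] /andP[ny _]; move: ny; rewrite hy -hl; case/negP; exact: lin.
Qed.

Lemma card_sub n (S : {set {set 'I_n}}) (sub : {set {set 'I_n}}) :
  sub \subset S -> (forall s, s \in S -> #|s| = 3) ->
  (forall a : 'I_n, #|[set s in sub | a \in s]| = 1) -> 3 * #|sub| = n.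
Proof.
move=> Hs H3 H1.
have -> : 3 * #|sub| = \sum_(s in sub) #|s|.
  rewrite mulnC -sum_nat_const; apply: eq_bigr => s si.
  by rewrite H3 // (subsetP Hs).
have -> : \sum_(s in sub) #|s| = \sum_(s in sub) \sum_(a : 'I_n) (a \in s : nat).
  apply: eq_bigr => s _; rewrite -sum1_card big_mkcond /=.
  by apply: eq_bigr => a _; case: (a \in s).
rewrite exchange_big /=.
transitivity (\sum_(a : 'I_n) 1); last by rewrite sum1_card card_ord.
apply: eq_bigr => a _.
rewrite -(H1 a) -sum1_card big_mkcond /= [RHS]big_mkcond /=.
by apply: eq_bigr => s _; rewrite inE; case: (s \in sub); case: (a \in s).
Qed.

Definition partner n t (sub : {set {set 'I_n}}) (q : 'I_t) (v : vert n t) : vert n t :=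
  match v with
  | VU' s => @VU n t s | VW' s => @VW n t s | VX a => @VI n t (fsel sub a) a
  | VP => @VPi n t q | _ => v end.

Definition isRep n t (C sub : {set {set 'I_n}}) (v : vert n t) : bool :=
  match v with
  | VU' s => s \in C | VW' s => (s \in C) && (s \notin sub)
  | VX _ => true | VP => true | _ => false end.

Definition vtag n t (v : vert n t) : nat :=
  match v with
  | VX _ => 0 | VI _ _ => 1 | VU _ => 2 | VW _ => 3 | VU' _ => 4 | VW' _ => 5
  | VP => 6 | VPi _ => 7 end.

Definition Rset n t (C sub : {set {set 'I_n}}) : {set vert n t} :=
  ((@VU' n t) @: C) :|: ((@VW' n t) @: (C :\: sub)) :|: ((@VX n t) @: setT) :|: [set @VP n t].

Arguments Rset {n t}.

Lemma cardsU_tag (T : finType) (tg : T -> nat) (K : pred nat) (A B : {set T}) :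
  (forall x, x \in A -> K (tg x)) -> (forall x, x \in B -> ~~ K (tg x)) ->
  #|A :|: B| = #|A| + #|B|.
Proof.
move=> hA hB; rewrite cardsU.
suff -> : A :&: B = set0 by rewrite cards0 subn0.
apply/setP => x; rewrite !inE; apply/negP => /andP[/hA ha /hB hb].
by rewrite ha in hb.
Qed.

Lemma imset_tagF (T U : finType) (tg : U -> nat) (f : T -> U) (A : {set T}) k v :
  (forall x, tg (f x) = k) -> tg v != k -> (v \in f @: A) = false.
Proof. by move=> hf hv; apply/imsetP => -[x _ ex]; rewrite ex hf eqxx in hv. Qed.

Lemma eqVP n t (v : vert n t) : (v == @VP n t) = (vtag v == 6).
Proof. by case: v => * /=; apply/eqP. Qed.

Lemma memR n t (C sub : {set {set 'I_n}}) (v : vert n t) :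
  (v \in Rset C sub) = isRep C sub v.
Proof.
have i4 : injective (@VU' n t) by move=> x y [].
have i5 : injective (@VW' n t) by move=> x y [].
have i0 : injective (@VX n t) by move=> x y [].
rewrite !inE.
case: v => [a|s a|s|s|s|s||i] /=;
  rewrite ?(mem_imset _ _ i4) ?(mem_imset _ _ i5) ?(mem_imset _ _ i0)
   ?(@imset_tagF _ _ (@vtag n t) (@VU' n t) _ 4) ?(@imset_tagF _ _ (@vtag n t) (@VW' n t) _ 5)
   ?(@imset_tagF _ _ (@vtag n t) (@VX n t) _ 0) ?inE ?eqVP ?orbF //=.
by rewrite andbC.
Qed.

Lemma cardR n t (C sub : {set {set 'I_n}}) :
  #|@Rset n t C sub| = #|C| + #|C :\: sub| + n + 1.
Proof.
have i4 : injective (@VU' n t) by move=> x y [].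
have i5 : injective (@VW' n t) by move=> x y [].
have i0 : injective (@VX n t) by move=> x y [].
rewrite /Rset.
rewrite (@cardsU_tag _ (@vtag n t) (fun k => k != 6)); last first.
- by move=> x; rewrite inE => /eqP-> /=.
- by move=> x; rewrite !inE => /orP[/orP[]|] /imsetP[y _ ->].
rewrite (@cardsU_tag _ (@vtag n t) (fun k => k != 0)); last first.
- by move=> x /imsetP[y _ ->].
- by move=> x; rewrite !inE => /orP[] /imsetP[y _ ->].
rewrite (@cardsU_tag _ (@vtag n t) (fun k => k == 4)); last first.
- by move=> x /imsetP[y _ ->].
- by move=> x /imsetP[y _ ->].
by rewrite !card_imset // cardsT card_ord cards1.
Qed.

Lemma partner_notrep n t (C sub : {set {set 'I_n}}) (q : 'I_t) (x : vert n t) :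
  isRep C sub x -> isRep C sub (partner sub q x) = false.
Proof. by case: x. Qed.

Lemma partner_inj n t (C sub : {set {set 'I_n}}) (q : 'I_t) (x y : vert n t) :
  isRep C sub x -> isRep C sub y -> partner sub q x = partner sub q y -> x = y.
Proof.
case: x => [a|s a|s|s|s|s||i]; case: y => [b|s' b|s'|s'|s'|s'||j] //=;
  by move=> _ _ []; intros; subst.
Qed.

Lemma div_aux x y : 3 * y = x -> (2 * x) %/ 3 = 2 * y.
Proof. by move=> <-; rewrite mulnCA mulKn. Qed.

Theorem lemma14 (c t m : nat) (S : 'I_t -> {set {set 'I_(3 * c)}})
  (Hsize3 : forall i s, s \in S i -> #|s| = 3)
  (Hm : forall i, #|S i| = m)
  (Hdistinct : injective S)
  (q : 'I_t) (Hyes : X3C_yes (S q)) :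
  exists M : {set {set vert (3 * c) t}},
    acyclic_matching (Gvert S) (Gadj S) M /\
    #|M| = 2 * #|Cset S| + (2 * (3 * c)) %/ 3 + 1.
Proof.
case: Hyes => sub [Hsub Hex].
set n := 3 * c in S Hsize3 Hm Hdistinct sub Hsub Hex *.
set C := Cset S.
have HSC : forall s, s \in S q -> s \in C.
  by move=> s hs; apply/bigcupP; exists q.
have HsubC : sub \subset C by apply/subsetP => s /(subsetP Hsub) /HSC.
have Hcard : 3 * #|sub| = n := card_sub Hsub (Hsize3 q) Hex.
have Hf : forall a, (fsel sub a \in sub) && (a \in fsel sub a).
  move=> a; have /eqP/cards1P[s Hs] := Hex a.
  rewrite /fsel; case: pickP => [s' /andP[h1 h2] | none] /=; first by rewrite h1 h2.
  by have := none s; move: (set11 s); rewrite -Hs inE => /andP[-> ->].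
have Hu : forall a s, s \in sub -> a \in s -> s = fsel sub a.
  move=> a s hs has; have /eqP/cards1P[s0 Hs] := Hex a.
  have := Hf a => /andP[h1 h2].
  have e1 : s \in [set s in sub | a \in s] by rewrite inE hs has.
  have e2 : fsel sub a \in [set s in sub | a \in s] by rewrite inE h1 h2.
  by move: e1 e2; rewrite Hs !inE => /eqP-> /eqP->.
pose edge (v : vert n t) := [set v; partner sub q v].
pose M := [set edge x | x in Rset C sub].
exists M; split; last first.
  rewrite card_in_imset; last first.
    move=> x y; rewrite !memR => hx hy exy.
    have : y \in edge x by rewrite exy !inE eqxx.
    rewrite !inE => /orP[/eqP//|/eqP ey].
    by move: hy; rewrite ey partner_notrep.
  rewrite cardR cardsD (setIidPr HsubC).
  have hle : #|sub| <= #|C| by apply: subset_leq_card.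
  rewrite (div_aux Hcard); lia.
have HfC : forall a, fsel sub a \in C.
  by move=> a; have /andP[h _] := Hf a; exact: (subsetP HsubC).
split.
  split.
    move=> E /imsetP[x xR ->]; rewrite memR in xR.
    exists x, (partner sub q x); split => //.
    - by case: x xR => [a|s a|s|s|s|s||i] //= h; rewrite inE //=; case/andP: h.
    - case: x xR => [a|s a|s|s|s|s||i] //= h; rewrite inE //=; try by case/andP: h.
      by have /andP[_ ->] := Hf a; rewrite HfC.
    - by case: x xR => //= *; apply/eqP => -[].
    - rewrite /Gadj; case: x xR => [a|s a|s|s|s|s||i] //= h; rewrite ?eqxx //= ?orbT //=;
        try by case/andP: h.
      by have /andP[_ ->] := Hf a; rewrite HfC.
  move=> E F /imsetP[x xR ->] /imsetP[y yR ->] neq.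
  rewrite memR in xR; rewrite memR in yR.
  rewrite -setI_eq0; apply/eqP/setP => v; rewrite !inE.
  apply/negP => /andP[/orP[/eqP ex|/eqP ex] /orP[/eqP ey|/eqP ey]].
  - by move: neq; rewrite -ex -ey eqxx.
  - by move: xR; rewrite -ex ey partner_notrep.
  - by move: yR; rewrite -ey ex partner_notrep.
  - by move: neq; rewrite (partner_inj xR yR (etrans (esym ex) ey)) eqxx.
move=> [s [ss us aU cs]].
apply: (negP (@no_cycle_rank _ (Gadj S) (inU sub C q) (rank sub) (parent sub) _ _ s ss us _)) cs.
- by move=> x y; rewrite /Gadj orbC.
- move=> x y; exact: (local_parent Hsub Hu).
apply/allP => v /(allP aU); rewrite /cover => /bigcupP[E /imsetP[x xR ->]].
rewrite memR in xR; rewrite !inE => /orP[/eqP->|/eqP->]; case: x xR => //= *.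
by rewrite Hf.
Qed.
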